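(* For the coprime hider strategy $y$, consider two disjoint intervals $[u\oplus\ell]_{n-1}$ and $[v\oplus s]_{n-1}$ (with $u,v,\ell,s$ nonnegative integers) such that $\ell+s\le c$. Then $$y([u\oplus\ell]_{n-1})+y([v\oplus s]_{n-1})\le y([u\oplus(\ell+s+1)]_{n-1}).$$
   Context: Let $k\ge2$, $n>2^k$, $c=2^k-2$ with $\gcd(c,n-1)=1$, and let $h,w$ be the positive integers with $h(n-1)-wc=1$ and $w\in\{1,\dots,n-2\}$ minimal. For integers $u,\ell$ and $r\ge1$, $[u\oplus\ell]_r=\{w\bmod r: u\le w\le u+\ell-1\}$; $[a,b]=\{a,\dots,b\}$; $y(S)=\sum_{i\in S}y_i$. Coprime hider strategy $y\in\mathbb{R}^{\{0,\dots,n-1\}}$: $g(v)=v\frac{h}{wc}$, $r=\lfloor c/h\rfloor$; $y_0=y_{n-1}=0$; starting at $v=1$, repeatedly choose the largest $r^*\in\{r,r+1\}$ with $g(v+r^*-1)\le y([1,v-1])+\frac1w$, set $y_i=\frac{1}{r^*w}$ for $i\in\{v,\dots,v+r^*-1\}$, replace $v$ by $v+r^*$; stop when $v>n-2$. *)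

(* Defs.v *)
From mathcomp Require Import all_boot all_order all_algebra.
Set Implicit Arguments. Unset Strict Implicit. Unset Printing Implicit Defensive.
Import Order.TTheory GRing.Theory Num.Theory.
Local Open Scope ring_scope.

Definition cval (k : nat) : nat := (2 ^ k - 2)%N .

Section Hider.
Variables (R : realFieldType) (n k h w : nat).

Definition gfun (v : nat) : R := v%:R * h%:R / (w%:R * (cval k)%:R).

Definition rval : nat := (cval k %/ h)%N .

(* State: current start v and the current
   value S = y([1, v-1]).  Stops when v > n - 2.
   Fuel n suffices since r >= 1 under the standing hypotheses. *)
Fixpoint blocks (fuel v : nat) (S : R) : seq (nat * nat) :=
  match fuel with
  | 0 => [::]
  | fuel'.+1 =>
      if (n - 2 < v)%N then [::]
      else
        let rs := if gfun (v + rval.+1 - 1) <= S + 1 / w%:R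
                  then rval.+1 else rval in
        (v, rs) :: blocks fuel' (v + rs)
                     (S + \sum_(v <= i < v + rs) (1 / (rs%:R * w%:R)))
  end.

Definition hider_blocks : seq (nat * nat) := blocks n 1 0.

Definition value_of_blocks (bs : seq (nat * nat)) (i : nat) : R :=
  foldr (fun b acc => if (b.1 <= i < b.1 + b.2)%N
                      then 1 / (b.2%:R * w%:R) else acc) 0 bs.

Definition hider (i : nat) : R :=
  if (1 <= i <= n - 2)%N then value_of_blocks hider_blocks i else 0.

End Hider.

(* [u (+) l]_r = { x mod r : u <= x <= u + l - 1 }, as a finite set of 'I_r. *)
Definition cyc_interval (r u l : nat) : {set 'I_r} :=
  [set i : 'I_r | has (fun x => x %% r == nat_of_ord i)%N (iota u l)].

Definition ysum (R : realFieldType) (r : nat) (y : nat -> R) (S : {set 'I_r}) : R :=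
  \sum_(i in S) y (nat_of_ord i).

(* Main.v *)
Require Import Defs.
From mathcomp Require Import all_boot all_order all_algebra.
From mathcomp Require Import zify ring lra.
Import Order.TTheory GRing.Theory Num.Theory.


Definition Fb (c h j : nat) : nat := (j * c) %/ h.
Definition Lb c h j := (Fb c h j.+1 - Fb c h j)%N.
Definition Bk c h x := ((x * h).-1 %/ c)%N.

Lemma div_eqK m d q : (0 < d)%N -> (q * d <= m < q.+1 * d)%N -> m %/ d = q.
Proof.
move=> d0 /andP[h1 h2]; apply/eqP; rewrite eqn_leq leq_divRL // h1 andbT.
by rewrite -ltnS ltn_divLR.
Qed.

Lemma Fadd c h a b : (0 < h)%N ->
  (Fb c h a + Fb c h b <= Fb c h (a + b) <= Fb c h a + Fb c h b + 1)%N.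
Proof.
move=> h0; rewrite /Fb mulnDl (divnD _ _ h0).
by case: (h <= _)%N => /=; rewrite ?addn0 ?leq_addr ?leqnn.
Qed.

Lemma F0 c h : Fb c h 0 = 0%N.
Proof. by rewrite /Fb mul0n div0n. Qed.

Lemma Fmono c h a b : (a <= b)%N -> (Fb c h a <= Fb c h b)%N.
Proof. by move=> ab; rewrite /Fb leq_div2r // leq_mul2r ab orbT. Qed.

Lemma Lb_bounds c h j : (0 < h)%N ->
  (c %/ h <= Lb c h j <= (c %/ h).+1)%N.
Proof.
move=> h0; have := Fadd c h j 1 h0; rewrite addn1 /Lb.
have -> : Fb c h 1 = (c %/ h)%N by rewrite /Fb mul1n.
move: (Fb c h j) (Fb c h j.+1) (c %/ h) => a b r; lia.
Qed.

Lemma Lpos c h j : (0 < h)%N -> (h <= c)%N -> (0 < Lb c h j)%N.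
Proof.
move=> h0 hc; have := Lb_bounds c h j h0.
have : (0 < c %/ h)%N by rewrite divn_gt0.
move: (Lb c h j) (c %/ h) => a b; lia.
Qed.

Lemma Flt c h K x : (0 < h)%N -> (Fb c h K < x)%N = (K * c < x * h)%N.
Proof. by move=> h0; rewrite /Fb ltn_divLR. Qed.

Lemma Fle c h K x : (0 < h)%N -> (x <= Fb c h K)%N = (x * h <= K * c)%N.
Proof. by move=> h0; rewrite /Fb leq_divRL. Qed.

Lemma Bk_spec c h K x : (0 < h)%N -> (0 < c)%N ->
  (Fb c h K < x <= Fb c h K.+1)%N -> Bk c h x = K.
Proof.
move=> h0 c0 /andP[]; rewrite Flt // Fle // => l1 l2.
apply: div_eqK => //; apply/andP; split; lia.
Qed.

Lemma exists_blk c h z : (0 < h)%N -> (0 < c)%N ->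
  exists K, (Fb c h K <= z <= Fb c h K.+1)%N.
Proof.
move=> h0 c0; exists (z * h %/ c)%N; apply/andP; split.
  rewrite /Fb; apply: (@leq_trans ((z * h) %/ h)); last by rewrite mulnK.
  by rewrite leq_div2r // leq_divM.
by rewrite Fle //; apply: ltnW; rewrite ltn_ceil.
Qed.

Local Open Scope ring_scope.

Definition om (R : realFieldType) c h x : R := 1 / (Lb c h (Bk c h x))%:R.
Definition Pt (R : realFieldType) c h z : R := \sum_(0 <= i < z) om R c h i.+1.

Lemma Fge c h K : (0 < h)%N -> (h <= c)%N -> (K <= Fb c h K)%N.
Proof. by move=> h0 hc; rewrite Fle // leq_mul2l hc orbT. Qed.

Lemma Fstrict c h K : (0 < h)%N -> (h <= c)%N -> (Fb c h K < Fb c h K.+1)%N.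
Proof.
move=> h0 hc; have := Lpos c h K h0 hc; rewrite /Lb.
move: (Fb c h K) (Fb c h K.+1) => a b; lia.
Qed.

Lemma om_blk R c h K x : (0 < h)%N -> (0 < c)%N ->
  (Fb c h K < x <= Fb c h K.+1)%N -> om R c h x = 1 / (Lb c h K)%:R.
Proof. by move=> h0 c0 hx; rewrite /om (Bk_spec c h K x h0 c0 hx). Qed.

Lemma LbR_neq0 (R : realFieldType) c h K : (0 < h)%N -> (h <= c)%N -> (Lb c h K)%:R != 0 :> R.
Proof. by move=> h0 hc; rewrite pnatr_eq0 -lt0n Lpos. Qed.

Lemma Pt_closed R c h z K : (0 < h)%N -> (h <= c)%N ->
  (Fb c h K <= z <= Fb c h K.+1)%N ->
  Pt R c h z = K%:R + (z - Fb c h K)%:R / (Lb c h K)%:R.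
Proof.
move=> h0 hc; have c0 : (0 < c)%N by apply: leq_trans hc.
elim: z K => [|z IH] K.
  move=> /andP[hK _]; have hge := Fge c h K h0 hc.
  have -> : K = 0%N by move: hK hge; move: (Fb c h K) => a; lia.
  by rewrite /Pt big_geq // F0 sub0n !mul0r addr0.
move=> /andP[hK1 hK2]; rewrite /Pt big_nat_recr //= -/(Pt R c h z).
case: (ltnP (Fb c h K) z.+1) => hK.
  rewrite (IH K); last by apply/andP; split; [rewrite -ltnS | apply: ltnW].
  rewrite (om_blk R c h K z.+1 h0 c0); last by rewrite hK hK2.
  rewrite subSn // -addn1 natrD mulrDl -addrA mul1r.
  by [].
have eK : Fb c h K = z.+1 by apply/eqP; rewrite eqn_leq hK hK1.
case: K hK1 hK2 hK eK IH => [|K'] hK1 hK2 hK eK IH.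
  by rewrite F0 in eK.
have hs := Fstrict c h K' h0 hc.
rewrite (IH K'); last by apply/andP; split; rewrite -?eK //; lia.
rewrite (om_blk R c h K' z.+1 h0 c0); last by rewrite eK leqnn andbT -eK.
rewrite eK subnn mul0r addr0.
have -> : (z - Fb c h K')%N = (Lb c h K' - 1)%N by rewrite /Lb eK; lia.
have hL := Lpos c h K' h0 hc.
rewrite natrB // -[(K'.+1)%:R]natr1 mulrBl divff ?(LbR_neq0 R c h K' h0 hc) //.
rewrite mul1r; ring.
Qed.


Lemma om_ge0 (R : realFieldType) c h x : 0 <= om R c h x.
Proof. by rewrite /om mul1r invr_ge0 ler0n. Qed.

Lemma Pt_mono (R : realFieldType) c h z z' : (z <= z')%N -> Pt R c h z <= Pt R c h z'.
Proof.
move=> zz; rewrite /Pt (big_cat_nat (leq0n z) zz) /= lerDl.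
by apply: sumr_ge0 => i _; apply: om_ge0.
Qed.

Lemma Pt_F (R : realFieldType) c h K : (0 < h)%N -> (h <= c)%N ->
  Pt R c h (Fb c h K) = K%:R.
Proof.
move=> h0 hc; rewrite (Pt_closed R c h (Fb c h K) K h0 hc).
  by rewrite subnn mul0r addr0.
by rewrite leqnn /=; apply: ltnW; apply: Fstrict.
Qed.

Lemma mono1 (R : realFieldType) c h K z (th : R) : (0 < h)%N -> (h <= c)%N ->
  0 <= th <= 1 -> (Fb c h K)%:R + th * (Lb c h K)%:R <= z%:R ->
  K%:R + th <= Pt R c h z.
Proof.
move=> h0 hc /andP[t0 t1] hz.
have hL : (0 < Lb c h K)%N := Lpos c h K h0 hc.
have eL : (Lb c h K)%:R = (Fb c h K.+1)%:R - (Fb c h K)%:R :> R.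
  by rewrite -natrB //; apply: ltnW; apply: Fstrict.
case: (leqP (Fb c h K.+1) z) => hK.
  apply: le_trans _ (Pt_mono R c h _ _ hK); by rewrite Pt_F // -natr1 lerD2l.
have hK0 : (Fb c h K <= z)%N.
  rewrite -(ler_nat R); apply: le_trans hz; rewrite lerDl mulr_ge0 //.
rewrite (Pt_closed R c h z K h0 hc); last by rewrite hK0 /=; apply: ltnW.
rewrite lerD2l natrB // ler_pdivlMr ?ltr0n //; lra.
Qed.

Lemma mono2 (R : realFieldType) c h K z (th : R) : (0 < h)%N -> (h <= c)%N ->
  0 <= th <= 1 -> z%:R <= (Fb c h K)%:R + th * (Lb c h K)%:R ->
  Pt R c h z <= K%:R + th.
Proof.
move=> h0 hc /andP[t0 t1] hz.
have hL : (0 < Lb c h K)%N := Lpos c h K h0 hc.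
have eL : (Lb c h K)%:R = (Fb c h K.+1)%:R - (Fb c h K)%:R :> R.
  by rewrite -natrB //; apply: ltnW; apply: Fstrict.
case: (leqP z (Fb c h K)) => hK.
  by apply: le_trans (Pt_mono R c h _ _ hK) _; rewrite Pt_F // lerDl.
have hK1 : (z <= Fb c h K.+1)%N.
  rewrite -(ler_nat R); apply: le_trans hz _; rewrite eL.
  have : th * ((Fb c h K.+1)%:R - (Fb c h K)%:R) <= (Fb c h K.+1)%:R - (Fb c h K)%:R :> R.
    rewrite -eL ler_piMl ?ler0n //.
  lra.
rewrite (Pt_closed R c h z K h0 hc); last by rewrite hK1 andbT; apply: ltnW.
rewrite lerD2l natrB ?(ltnW hK) // ler_pdivrMr ?ltr0n //; lra.
Qed.


Lemma eLb (R : realFieldType) c h K : (0 < h)%N -> (h <= c)%N ->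
  (Lb c h K)%:R = (Fb c h K.+1)%:R - (Fb c h K)%:R :> R.
Proof. by move=> h0 hc; rewrite -natrB //; apply: ltnW; apply: Fstrict. Qed.

Lemma blk_param (R : realFieldType) c h t : (0 < h)%N -> (h <= c)%N ->
  exists i (la : R), [/\ 0 <= la, la <= 1, Pt R c h t = i%:R + la &
     t%:R = (Fb c h i)%:R + la * ((Fb c h i.+1)%:R - (Fb c h i)%:R)].
Proof.
move=> h0 hc; have c0 : (0 < c)%N by apply: leq_trans hc.
have [i /andP[hi1 hi2]] := exists_blk c h t h0 c0.
have hL : (0 < Lb c h i)%N := Lpos c h i h0 hc.
have hLR : (0 : R) < (Lb c h i)%:R by rewrite ltr0n.
exists i, ((t - Fb c h i)%:R / (Lb c h i)%:R); split.
- by rewrite divr_ge0 ?ler0n.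
- rewrite ler_pdivrMr // mul1r ler_nat /Lb.
  by move: hi1 hi2; move: (Fb c h i) (Fb c h i.+1) => a b; lia.
- by rewrite (Pt_closed R c h t i h0 hc) ?hi1 ?hi2.
- rewrite -eLb // divfK ?(LbR_neq0 R c h i h0 hc) // natrB //.
  by rewrite addrC subrK.
Qed.

Lemma FaddR (R : realFieldType) c h a b : (0 < h)%N ->
  (Fb c h a)%:R + (Fb c h b)%:R <= (Fb c h (a + b))%:R :> R /\
  (Fb c h (a + b))%:R <= (Fb c h a)%:R + (Fb c h b)%:R + 1 :> R.
Proof.
move=> h0; have /andP[h1 h2] := Fadd c h a b h0.
split; first by rewrite -natrD ler_nat.
by rewrite -natrD natr1 ler_nat -addn1.
Qed.

Lemma Pt_sub (R : realFieldType) c h t u : (0 < h)%N -> (h <= c)%N ->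
  Pt R c h (t + u) <= Pt R c h t + Pt R c h u.
Proof.
move=> h0 hc.
have [i [la [l0 l1 ePt et]]] := blk_param R c h t h0 hc.
have [j [mu [m0 m1 ePu eu]]] := blk_param R c h u h0 hc.
rewrite ePt ePu.
have [A1 _] := FaddR R c h i j h0.
have [A2 _] := FaddR R c h i.+1 j h0.
have [A3 _] := FaddR R c h i j.+1 h0.
have [A4 _] := FaddR R c h i.+1 j.+1 h0.
rewrite addSn in A2; rewrite addnS in A3; rewrite addSn addnS in A4.
case: (lerP (la + mu) 1) => hs.
  have := @mono2 R c h (i + j)%N (t + u)%N (la + mu) h0 hc.
  rewrite eLb // natrD.
  move=> H; apply: le_trans (H _ _) _.
  - by apply/andP; split; [rewrite addr_ge0 | ].
  - rewrite et eu; nra.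
  - by rewrite ?natrD; lra.
have := @mono2 R c h (i + j).+1 (t + u)%N (la + mu - 1) h0 hc.
rewrite eLb // natrD.
move=> H; apply: le_trans (H _ _) _.
- by apply/andP; split; lra.
- rewrite et eu; nra.
- by rewrite -natr1 ?natrD; lra.
Qed.

Lemma Pt_sup (R : realFieldType) c h t u : (0 < h)%N -> (h <= c)%N ->
  Pt R c h t + Pt R c h u <= Pt R c h (t + u + 1).
Proof.
move=> h0 hc.
have [i [la [l0 l1 ePt et]]] := blk_param R c h t h0 hc.
have [j [mu [m0 m1 ePu eu]]] := blk_param R c h u h0 hc.
rewrite ePt ePu.
have [_ A1] := FaddR R c h i j h0.
have [_ A2] := FaddR R c h i.+1 j h0.
have [_ A3] := FaddR R c h i j.+1 h0.
have [_ A4] := FaddR R c h i.+1 j.+1 h0.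
rewrite addSn in A2; rewrite addnS in A3; rewrite addSn addnS in A4.
case: (lerP (la + mu) 1) => hs.
  have := @mono1 R c h (i + j)%N (t + u + 1)%N (la + mu) h0 hc.
  rewrite eLb // !natrD.
  move=> H; apply: le_trans _ (H _ _).
  - by rewrite ?natrD; lra.
  - by apply/andP; split; [rewrite addr_ge0 | ].
  - rewrite et eu; nra.
have := @mono1 R c h (i + j).+1 (t + u + 1)%N (la + mu - 1) h0 hc.
rewrite eLb // !natrD.
move=> H; apply: le_trans _ (H _ _).
- by rewrite -natr1 ?natrD; lra.
- by apply/andP; split; lra.
- rewrite et eu; nra.
Qed.


Lemma Frefl c h w N j : (0 < h)%N -> (w * c).+1 = (h * N)%N -> (j <= w)%N ->
  (Fb c h (w - j) + Fb c h j)%N = N.-1.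
Proof.
move=> h0 hW jw.
have e1 : (j * c + (w - j) * c = w * c)%N by rewrite -mulnDl subnKC.
have q1 := leq_divM (j * c) h.
have q2 := ltn_ceil (j * c) h0.
rewrite /Fb; set q := ((j * c) %/ h)%N in q1 q2 *.
rewrite mulSn in q2.
have hN : (N * h = (w * c).+1)%N by rewrite mulnC hW.
have qN : (q < N)%N.
  have : (q * h < N * h)%N.
    apply: (leq_ltn_trans q1); move: e1 hN; lia.
  by rewrite ltn_mul2r => /andP[].
have eN : (N.-1 * h + h = N * h)%N.
  by rewrite addnC -mulSn prednK //; move: qN; lia.
have -> : ((w - j) * c %/ h)%N = (N.-1 - q)%N.
  apply: div_eqK => //; apply/andP; split.
    rewrite mulnBl.
    move: (q * h)%N (N.-1 * h)%N (N * h)%N ((w - j) * c)%N (j * c)%N (w * c)%N q1 q2 e1 hN eN.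
    lia.
  rewrite -subSn; last by move: qN; lia.
  rewrite prednK; last by move: qN; lia.
  rewrite !mulnBl.
  move: (q * h)%N (N * h)%N ((w - j) * c)%N (j * c)%N (w * c)%N q1 q2 e1 hN.
  lia.
by move: qN; lia.
Qed.

Lemma Fw c h w N : (0 < h)%N -> (w * c).+1 = (h * N)%N -> Fb c h w = N.-1.
Proof. by move=> h0 hW; have := Frefl c h w N 0 h0 hW (leq0n w); rewrite subn0 F0 addn0. Qed.

Lemma blk_below c h w z : (0 < h)%N -> (h <= c)%N -> (0 < w)%N ->
  (z <= Fb c h w)%N -> exists K, (K < w)%N /\ (Fb c h K <= z <= Fb c h K.+1)%N.
Proof.
move=> h0 hc w0 zw; have c0 : (0 < c)%N by apply: leq_trans hc.
have [K0 /andP[k1 k2]] := exists_blk c h z h0 c0.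
case: (ltnP K0 w) => hK; first by exists K0; rewrite k1 k2.
exists w.-1; split; first by rewrite prednK.
have := Fmono c h _ _ hK; rewrite prednK // => hm.
rewrite zw andbT; have := Fmono c h _ _ (leq_pred w).
move: k1 hm zw; move: (Fb c h K0) (Fb c h w) (Fb c h w.-1) => a b d; lia.
Qed.

Lemma Pt_pal (R : realFieldType) c h w N z : (0 < h)%N -> (h <= c)%N -> (0 < w)%N ->
  (w * c).+1 = (h * N)%N -> (z <= N.-1)%N ->
  Pt R c h (N.-1 - z) = w%:R - Pt R c h z.
Proof.
move=> h0 hc w0 hW zN.
have eFw := Fw c h w N h0 hW.
have zw : (z <= Fb c h w)%N by rewrite eFw.
have [K [Kw /andP[k1 k2]]] := blk_below c h w z h0 hc w0 zw.
have r1 := Frefl c h w N K.+1 h0 hW Kw.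
have r2 := Frefl c h w N K h0 hW (ltnW Kw).
have eK : (w - K)%N = (w - K.+1).+1 by rewrite subnSK.
rewrite eK in r2.
set K' := (w - K.+1)%N in r1 r2 *.
have hL := Lpos c h K h0 hc.
have hLR : (Lb c h K)%:R != 0 :> R := LbR_neq0 R c h K h0 hc.
have eL : Lb c h K' = Lb c h K.
  rewrite /Lb; move: r1 r2; move: (Fb c h K') (Fb c h K'.+1) (Fb c h K) (Fb c h K.+1) => a b d e.
  lia.
rewrite (Pt_closed R c h (N.-1 - z) K' h0 hc); last first.
  move: r1 r2 k1 k2; move: (Fb c h K') (Fb c h K'.+1) (Fb c h K) (Fb c h K.+1) => a b d e.
  lia.
rewrite (Pt_closed R c h z K h0 hc) ?k1 ?k2 // eL.
have e1 : (N.-1 - z - Fb c h K')%N = (Lb c h K - (z - Fb c h K))%N.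
  rewrite /Lb; move: r1 r2 k1 k2; move: (Fb c h K') (Fb c h K'.+1) (Fb c h K) (Fb c h K.+1) => a b d e.
  lia.
have e2 : (z - Fb c h K <= Lb c h K)%N.
  rewrite /Lb; move: k1 k2; move: (Fb c h K) (Fb c h K.+1) => a b; lia.
rewrite e1 natrB // (natrB _ e2) -[K.+1%:R]natr1 mulrBl divff //; ring.
Qed.


Lemma blocks_step (R : realFieldType) n k h w fuel v S :
  @blocks R n k h w fuel.+1 v S =
  if (n - 2 < v)%N then [::] else
  let rs := if gfun R k h w (v + (rval k h).+1 - 1) <= S + 1 / w%:R
            then (rval k h).+1 else rval k h in
  (v, rs) :: @blocks R n k h w fuel (v + rs)
                     (S + \sum_(v <= i < v + rs) (1 / (rs%:R * w%:R))).
Proof. by []. Qed.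

Lemma vob_cons (R : realFieldType) w b bs i :
  value_of_blocks R w (b :: bs) i =
  if (b.1 <= i < b.1 + b.2)%N then 1 / (b.2%:R * w%:R) else value_of_blocks R w bs i.
Proof. by []. Qed.

Lemma blocks_val (R : realFieldType) n k h w : (0 < h)%N -> (h <= cval k)%N -> (0 < w)%N ->
  (w * cval k).+1 = (h * (n - 1))%N ->
  forall fuel j v S i, (j <= w)%N -> (w - j <= fuel)%N -> v = (Fb (cval k) h j).+1 ->
  S = j%:R / w%:R -> (Fb (cval k) h j < i <= Fb (cval k) h w)%N ->
  value_of_blocks R w (@blocks R n k h w fuel v S) i = om R (cval k) h i / w%:R.
Proof.
move=> h0 hc w0 hW; set c := cval k.
have c0 : (0 < c)%N by apply: leq_trans hc.
have eFw : Fb c h w = (n - 2)%N by rewrite (Fw c h w (n - 1) h0 hW); lia.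
have wR : (w%:R : R) != 0 by rewrite pnatr_eq0 -lt0n.
have cR : (c%:R : R) != 0 by rewrite pnatr_eq0 -lt0n.
elim=> [|fuel IH] j v S i jw jf ev eS /andP[i1 i2].
  have ejw : j = w by move: jw jf; lia.
  by move: i1 i2; rewrite ejw; lia.
have jw' : (j < w)%N.
  rewrite ltn_neqAle jw andbT; apply/negP => /eqP ejw.
  by move: i1 i2; rewrite ejw; lia.
have Fj1 : (Fb c h j.+1 <= Fb c h w)%N by apply: Fmono.
have Fjs := Fstrict c h j h0 hc.
rewrite blocks_step.
have -> : (n - 2 < v)%N = false by apply/negbTE; rewrite -leqNgt ev -eFw; lia.
set r := rval k h.
have hr : r = (c %/ h)%N by [].
have hLb := Lb_bounds c h j h0.
have cond : (gfun R k h w (v + r.+1 - 1) <= S + 1 / w%:R) =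
            (Fb c h j + r.+1 <= Fb c h j.+1)%N.
  rewrite Fle // /gfun eS.
  have -> : (j%:R / w%:R + 1 / w%:R : R) = (j.+1 * c)%:R / (w%:R * c%:R).
    by rewrite natrM -natr1; field; rewrite wR cR.
  rewrite ler_pM2r ?invr_gt0 ?mulr_gt0 ?ltr0n // -natrM ler_nat ev.
  by rewrite addSn subn1.
rewrite cond.
have ers : (if (Fb c h j + r.+1 <= Fb c h j.+1)%N then r.+1 else r) = Lb c h j.
  rewrite /Lb hr; move: hLb; rewrite /Lb.
  move: (Fb c h j) (Fb c h j.+1) (c %/ h)%N => a b d.
  case: ifP; lia.
rewrite /= ers.
have hL := Lpos c h j h0 hc.
case: ifP => hi.
  rewrite (om_blk R c h j i h0 c0); last first.
    by move: hi i1; rewrite ev /Lb; move: (Fb c h j) (Fb c h j.+1) => a b; lia.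
  by rewrite /om; field; rewrite wR (LbR_neq0 R c h j h0 hc).
apply: IH.
- exact: jw'.
- by move: jf jw'; lia.
- by rewrite ev /Lb; move: Fjs; move: (Fb c h j) (Fb c h j.+1) => a b; lia.
- rewrite sumr_const_nat addKn eS.
  have -> : (1 / ((Lb c h j)%:R * w%:R) *+ Lb c h j : R) = 1 / w%:R.
    by rewrite -mulr_natr; field; rewrite wR (LbR_neq0 R c h j h0 hc).
  by rewrite -natr1; field.
- apply/andP; split => //.
  by move: hi i1; rewrite ev /Lb; move: (Fb c h j) (Fb c h j.+1) => a b; lia.
Qed.


Lemma hider_val (R : realFieldType) n k h w x : (0 < h)%N -> (h <= cval k)%N -> (0 < w)%N ->
  (w <= n - 2)%N -> (w * cval k).+1 = (h * (n - 1))%N -> (1 <= x <= n - 2)%N ->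
  hider R n k h w x = om R (cval k) h x / w%:R.
Proof.
move=> h0 hc w0 wn hW hx; rewrite /hider hx /hider_blocks.
have eFw : Fb (cval k) h w = (n - 2)%N by rewrite (Fw (cval k) h w (n - 1) h0 hW); lia.
apply: (blocks_val R n k h w h0 hc w0 hW n 0).
- by [].
- by rewrite subn0; move: wn; lia.
- by rewrite F0.
- by rewrite mul0r.
- by rewrite F0 eFw.
Qed.

Lemma hider0 (R : realFieldType) n k h w : hider R n k h w 0 = 0.
Proof. by []. Qed.

Lemma cyc_sum (R : realFieldType) N (f : nat -> R) u l : (0 < N)%N -> (l <= N)%N ->
  \sum_(i in cyc_interval N u l) f (nat_of_ord i) = \sum_(0 <= x < l) f ((u + x) %% N)%N.
Proof.
move=> N0; elim: l => [|l IH] hl.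
  rewrite big_geq // big_pred0 // => i.
  by rewrite /cyc_interval inE.
pose o := Ordinal (ltn_pmod (u + l) N0).
have -> : cyc_interval N u l.+1 = o |: cyc_interval N u l.
  apply/setP => i; rewrite /cyc_interval !inE -addn1 iotaD has_cat /= orbF orbC.
  by congr (_ || _); rewrite eq_sym; apply/eqP/eqP => [H|->] //; apply: val_inj.
rewrite big_setU1 /=; last first.
  rewrite /cyc_interval inE; apply/hasPn => x; rewrite mem_iota => /andP[x1 x2].
  have -> : x = (u + (x - u))%N by rewrite subnKC.
  rewrite /= eqn_modDl modn_small; last by move: x1 x2 hl; lia.
  rewrite modn_small; last by move: hl; lia.
  by move: x1 x2; lia.
by rewrite IH ?(ltnW hl) // big_nat_recr //= addrC.
Qed.


Definition Tsum (R : realFieldType) N (y : nat -> R) z := \sum_(0 <= x < z) y (x %% N)%N.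

Lemma T_per (R : realFieldType) N (y : nat -> R) z :
  Tsum R N y (N + z) = Tsum R N y N + Tsum R N y z.
Proof.
rewrite /Tsum (big_cat_nat (leq0n N) (leq_addr z N)) /=; congr (_ + _).
rewrite -{1}[N]add0n big_addn addKn; apply: eq_bigr => i _.
by rewrite modnDr.
Qed.

Lemma win_sum (R : realFieldType) N (y : nat -> R) u l : (0 < N)%N ->
  \sum_(0 <= x < l) y ((u + x) %% N)%N =
  Tsum R N y ((u %% N) + l) - Tsum R N y (u %% N).
Proof.
move=> N0; set a := (u %% N)%N.
rewrite /Tsum (big_cat_nat (leq0n a) (leq_addr l a)) /= addrC addrK.
rewrite -{1}[a]add0n big_addn addKn; apply: eq_bigr => i _.
by rewrite /a [(i + _)%N]addnC modnDml.
Qed.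


Lemma T_small (R : realFieldType) c h w N (y : nat -> R) z :
  y 0%N = 0 -> (forall x, (1 <= x <= N.-1)%N -> y x = om R c h x / w%:R) ->
  (z < N)%N -> Tsum R N y z.+1 = Pt R c h z / w%:R.
Proof.
move=> hy0 hy zN; rewrite /Tsum big_nat_recl // mod0n hy0 add0r /Pt mulr_suml.
apply: eq_big_nat => i /andP[_ iz].
rewrite modn_small; last by move: iz zN; lia.
by rewrite hy //; move: iz zN; lia.
Qed.

Lemma key (R : realFieldType) c h w N (y : nat -> R) a s :
  (0 < h)%N -> (h <= c)%N -> (0 < w)%N -> (w * c).+1 = (h * N)%N ->
  y 0%N = 0 -> (forall x, (1 <= x <= N.-1)%N -> y x = om R c h x / w%:R) ->
  (a < N)%N -> (s < N)%N ->
  Tsum R N y (a + s) - Tsum R N y a <= Pt R c h s / w%:R /\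
  Pt R c h s / w%:R <= Tsum R N y (a + s.+1) - Tsum R N y a.
Proof.
move=> h0 hc w0 hW hy0 hy aN sN.
have N0 : (0 < N)%N by move: aN; lia.
have wR : (0 : R) < w%:R by rewrite ltr0n.
have T0 : Tsum R N y 0 = 0 by rewrite /Tsum big_geq.
have TS := fun z => T_small R c h w N y z hy0 hy.
have TN : Tsum R N y N = 1.
  have H : Tsum R N y N = Pt R c h N.-1 / w%:R by move: (TS N.-1); rewrite prednK //; apply.
  rewrite H.
  rewrite -(Fw c h w N h0 hW) Pt_F // divff //.
  by rewrite gt_eqF.
have pal := fun z => Pt_pal R c h w N z h0 hc w0 hW.
have lem : forall x y0 : R, (x / w%:R <= y0 / w%:R) = (x <= y0).
  by move=> x y0; rewrite ler_pM2r // invr_gt0.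
case: a aN => [|a] aN.
  rewrite ?add0n T0 !subr0; split; last by rewrite TS.
  case: s sN => [|s] sN; first by rewrite T0 /Pt big_geq // mul0r.
  by rewrite TS ?lem; [apply: Pt_mono | move: sN; lia].
have Ta : Tsum R N y a.+1 = Pt R c h a / w%:R by rewrite TS //; move: aN; lia.
rewrite Ta; split.
  case: (leqP (a.+1 + s) N) => haN.
    case: s sN haN => [|s] sN haN; first by rewrite addn0 Ta subrr /Pt big_geq // mul0r.
    rewrite addSn TS; last by move: haN; lia.
    by rewrite -mulrBl lem lerBlDl; apply: Pt_sub.
  have -> : (a.+1 + s = N + (a.+1 + s - N))%N by move: haN; lia.
  rewrite T_per TN.
  have -> : (a.+1 + s - N = (a + s - N).+1)%N by move: haN; lia.
  rewrite TS; last by move: haN sN; lia.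
  have wn : (w%:R : R) != 0 by rewrite gt_eqF.
  have -> : 1 + Pt R c h (a + s - N) / w%:R - Pt R c h a / w%:R =
            (w%:R - Pt R c h a + Pt R c h (a + s - N)) / w%:R by field.
  rewrite -pal; last by move: aN; lia.
  rewrite lem.
  have E : ((N.-1 - a) + (a + s - N) + 1 = s)%N by move: haN aN sN; lia.
  by have := Pt_sup R c h (N.-1 - a) (a + s - N) h0 hc; rewrite E.
case: (leqP (a.+1 + s.+1) N) => haN.
  rewrite addSn TS; last by move: haN; lia.
  rewrite -mulrBl lem lerBrDl.
  by have := Pt_sup R c h a s h0 hc; rewrite addn1 addnS.
have -> : (a.+1 + s.+1 = N + (a.+1 + s.+1 - N))%N by move: haN; lia.
rewrite T_per TN.
have -> : (a.+1 + s.+1 - N = (a + s.+1 - N).+1)%N by move: haN; lia.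
rewrite TS; last by move: haN sN; lia.
have wn : (w%:R : R) != 0 by rewrite gt_eqF.
have -> : 1 + Pt R c h (a + s.+1 - N) / w%:R - Pt R c h a / w%:R =
          (w%:R - Pt R c h a + Pt R c h (a + s.+1 - N)) / w%:R by field.
rewrite -pal; last by move: aN; lia.
rewrite lem.
have E : ((N.-1 - a) + (a + s.+1 - N) = s)%N by move: haN aN sN; lia.
by have := Pt_sub R c h (N.-1 - a) (a + s.+1 - N) h0 hc; rewrite E.
Qed.


Theorem lemma3p9 (R : realFieldType) (k n h w : nat)
  (hk : (2 <= k)%N) (hn : (2 ^ k < n)%N)
  (hcop : coprime (cval k) (n - 1))
  (hh : (0 < h)%N) (hw1 : (1 <= w)%N) (hw2 : (w <= n - 2)%N)
  (hhw : (h * (n - 1) = w * cval k + 1)%N)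
  (hwmin : forall w' h' : nat, (1 <= w')%N -> (w' <= n - 2)%N -> (0 < h')%N ->
           (h' * (n - 1) = w' * cval k + 1)%N -> (w <= w')%N)
  (u v l s : nat)
  (hdisj : [disjoint cyc_interval (n - 1) u l & cyc_interval (n - 1) v s])
  (hls : (l + s <= cval k)%N) :
  ysum (hider R n k h w) (cyc_interval (n - 1) u l)
    + ysum (hider R n k h w) (cyc_interval (n - 1) v s)
  <= ysum (hider R n k h w) (cyc_interval (n - 1) u (l + s + 1)).
Proof.
have e4 : (2 ^ 2 <= 2 ^ k)%N by rewrite leq_exp2l.
have Nc : (cval k + 2 < n)%N by rewrite /cval; move: e4 hn; move: (2 ^ k)%N => p; lia.
have c2 : (2 <= cval k)%N by rewrite /cval; move: e4; move: (2 ^ k)%N => p; lia.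
set c := cval k in hhw hls Nc c2 *.
set N := (n - 1)%N in hhw hdisj *.
have N0 : (0 < N)%N by rewrite /N; lia.
have w0 : (0 < w)%N by [].
have hc : (h <= c)%N.
  rewrite leqNgt; apply/negP => hlt.
  have m1 : (c.+1 * N <= h * N)%N by rewrite leq_mul2r hlt orbT.
  have m2 : (w * c <= (n - 2) * c)%N by rewrite leq_mul2r hw2 orbT.
  have e5 : (c.+1 * N = (n - 2) * c + c + N)%N.
    rewrite mulSn /N.
    have -> : (n - 1 = (n - 2).+1)%N by lia.
    by rewrite mulnS; ring.
  move: m1 m2 e5 hhw; move: (c.+1 * N)%N (h * N)%N (w * c)%N ((n - 2) * c)%N => A B C D.
  rewrite /N; lia.
have hW : (w * c).+1 = (h * N)%N by rewrite hhw addn1.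
have hy : forall x, (1 <= x <= N.-1)%N -> hider R n k h w x = om R c h x / w%:R.
  move=> x hx; apply: (hider_val R n k h w x hh hc w0 hw2 hW).
  by move: hx; rewrite /N; lia.
have hy0 := hider0 R n k h w.
rewrite /ysum !cyc_sum //; try by rewrite /N; lia.
rewrite !win_sum //.
set a := (u %% N)%N; set b := (v %% N)%N.
have aN : (a < N)%N by rewrite ltn_pmod.
have bN : (b < N)%N by rewrite ltn_pmod.
have sN : (s < N)%N by rewrite /N; lia.
have [K1 _] := key R c h w N (hider R n k h w) b s hh hc w0 hW hy0 hy bN sN.
have K2 : Pt R c h s / w%:R <=
   Tsum R N (hider R n k h w) (a + l + s.+1) - Tsum R N (hider R n k h w) (a + l).
  case: (ltnP (a + l) N) => hal.
    by have [_ K2] := key R c h w N (hider R n k h w) (a + l) s hh hc w0 hW hy0 hy hal sN.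
  have -> : (a + l = N + (a + l - N))%N by lia.
  rewrite -[(N + _ + _)%N]addnA !T_per.
  have hal' : (a + l - N < N)%N by rewrite /N; lia.
  have [_ K2] := key R c h w N (hider R n k h w) (a + l - N) s hh hc w0 hW hy0 hy hal' sN.
  lra.
have -> : (a + (l + s + 1) = a + l + s.+1)%N by lia.
lra.
Qed.
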